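(* Let $(Q,d)$ be a compact metric space, $p_0:Q\to[0,+\infty]$ a function which is not identically $+\infty$, $f$ a nonnegative Radon measure on $Q$, and take the transportation cost $c(x,y)=d(x,y)$. Consider the problem of maximizing $$F(p)=\int_Q\Big(\max_{y\in T_p(x)}p(y)\Big)\,df(x)$$ over $\mathcal A=\{p:Q\to\overline{\mathbb{R}}\ :\ p\le p_0 \text{ on } Q,\ p\text{ lower semicontinuous}\}$. Then an optimal solution is given by $$p_{opt}(x)=\max\big\{p(x)\ :\ p\in\mathrm{Lip}_{1,d}(Q),\ p\le p_0\big\}.$$
   Context: For $p\in\mathcal A$ and $x\in Q$: $v_p(x)=\min_{y\in Q}\{d(x,y)+p(y)\}$ and $T_p(x)=\{y\in Q\ :\ d(x,y)+p(y)=v_p(x)\}$. $\mathrm{Lip}_{1,d}(Q)$ denotes the class of functions on $Q$ that are Lipschitz with respect to $d$ with Lipschitz constant at most $1$. *)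

(* Defs.v *)
From HB Require Import structures.
From mathcomp Require Import all_boot all_order all_algebra.
From mathcomp Require Import all_classical all_reals all_analysis.
Set Implicit Arguments. Unset Strict Implicit. Unset Printing Implicit Defensive.
Import Order.TTheory GRing.Theory Num.Theory.
Import numFieldNormedType.Exports.
Local Open Scope classical_set_scope.
Local Open Scope ring_scope.

(* A metric space carrying a distinguished point (needed to build the Borel
   sigma-algebra via g_sigma_algebraType; harmless since Q is nonempty in the
   theorem, p0 not being identically +oo). *)
#[short(type="pmetricType")]
HB.structure Definition PointedMetric (K : numDomainType) :=
  { M of Pointed M & Metric K M }.

Definition borel_of (R : realType) (Q : pmetricType R) :=
  g_sigma_algebraType (@open Q).

Section defs.
Context {R : realType} {Q : pmetricType R}.
Local Open Scope ereal_scope.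

Definition dQ : Q -> Q -> R := @mdist R Q.

Definition vfun (p : Q -> \bar R) (x : Q) : \bar R :=
  ereal_inf [set (dQ x y)%:E + p y | y in [set: Q]].

Definition Tset (p : Q -> \bar R) (x : Q) : set Q :=
  [set y | (dQ x y)%:E + p y = vfun p x].

Definition Fintegrand (p : Q -> \bar R) (x : Q) : \bar R :=
  ereal_sup [set p y | y in Tset p x].

Definition Lip1 (q : Q -> R) : Prop :=
  forall x y, (`|q x - q y| <= dQ x y)%R.

Definition admissible (p0 p : Q -> \bar R) : Prop :=
  lower_semicontinuous p /\ (forall x, p x <= p0 x).

Definition p_opt (p0 : Q -> \bar R) (x : Q) : \bar R :=
  ereal_sup [set (q x)%:E | q in [set q | Lip1 q /\ forall y, (q y)%:E <= p0 y]].

End defs.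

Definition Fobj (R : realType) (Q : pmetricType R)
  (f : {measure set (borel_of Q) -> \bar R}) (p : Q -> \bar R) : \bar R :=
  (\int[f]_(x in [set: borel_of Q]) Fintegrand p x)%E.

(* Main.v *)
Require Import Defs.
From HB Require Import structures.
From mathcomp Require Import all_boot all_order all_algebra.
From mathcomp Require Import all_classical all_reals all_analysis.
From mathcomp Require Import lra.
Import Order.TTheory GRing.Theory Num.Theory.
Local Open Scope classical_set_scope.
Local Open Scope ring_scope.
Local Open Scope ereal_scope.

Section aux.
Context {R : realType} {Q : pmetricType R}.
Variable p0 : Q -> \bar R.
Hypothesis p0_ge0 : forall x, 0 <= p0 x.
Variable y0 : Q.
Hypothesis p0y0 : p0 y0 != +oo.

Definition Ef (x : Q) : \bar R :=
  ereal_inf [set (dQ x y)%:E + p0 y | y in [set: Q]].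

Lemma dQ_ge0 (x y : Q) : (0 <= dQ x y)%R.
Proof. exact: mdist_ge0. Qed.

Lemma Ef_ge0 (x : Q) : 0 <= Ef x.
Proof.
apply: le_ereal_inf_tmp => _ [y _ <-].
by apply: adde_ge0 => //; rewrite lee_fin dQ_ge0.
Qed.

Lemma Ef_le (x y : Q) : Ef x <= (dQ x y)%:E + p0 y.
Proof. by apply: ereal_inf_lbound; exists y. Qed.

Lemma Ef_fin (x : Q) : Ef x \is a fin_num.
Proof.
rewrite ge0_fin_numE ?Ef_ge0 //.
apply: (le_lt_trans (Ef_le x y0)).
have h0 : p0 y0 \is a fin_num by rewrite ge0_fin_numE // ltey.
by rewrite -(fineK h0) -EFinD ltry.
Qed.

Definition pst (x : Q) : R := fine (Ef x).

Lemma pstE (x : Q) : (pst x)%:E = Ef x.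
Proof. by rewrite /pst fineK // Ef_fin. Qed.

Lemma pst_tri (x y : Q) : (pst x <= dQ x y + pst y)%R.
Proof.
rewrite -lee_fin EFinD !pstE.
rewrite -leeBlDl //.
apply: le_ereal_inf_tmp => _ [z _ <-].
rewrite leeBlDl //.
apply: (le_trans (Ef_le x z)).
rewrite addeA -EFinD; apply: leeD2r; rewrite lee_fin.
exact: metric_triangle.
Qed.

Lemma pst_lip : Lip1 pst.
Proof.
move=> x y; have h1 := pst_tri x y; have h2 := pst_tri y x.
have hs : dQ y x = dQ x y by exact: metric_sym.
rewrite hs in h2.
rewrite ler_norml; apply/andP; split; lra.
Qed.

Lemma pst_le (x : Q) : (pst x)%:E <= p0 x.
Proof. by rewrite pstE; apply: (le_trans (Ef_le x x)); rewrite /dQ mdistxx add0e. Qed.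

Lemma popt_eq : p_opt p0 = fun x => (pst x)%:E.
Proof.
apply: funext => x; apply/le_anti/andP; split.
  apply: ge_ereal_sup => _ [q [Lq Hq] <-].
  rewrite pstE; apply: le_ereal_inf_tmp => _ [y _ <-].
  apply: (@le_trans _ _ ((dQ x y)%:E + (q y)%:E)).
    rewrite -EFinD lee_fin.
    have := Lq x y; rewrite ler_norml => /andP[_ h]; lra.
  by apply: leeD2l.
apply: ereal_sup_ubound; exists pst => //; split; [exact: pst_lip| exact: pst_le].
Qed.

Lemma Fint_le (p : Q -> \bar R) : (forall x, p x <= p0 x) ->
  forall x, Fintegrand p x <= (pst x)%:E.
Proof.
move=> pp0 x; apply: ge_ereal_sup => _ [y Ty <-].
apply: (@le_trans _ _ ((dQ x y)%:E + p y)).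
  by apply: lee_paddl => //; rewrite lee_fin dQ_ge0.
rewrite Ty /vfun pstE; apply: le_ereal_inf_tmp => _ [z _ <-].
apply: (le_trans (ereal_inf_lbound _)).
  by exists z.
by apply: leeD2l.
Qed.

Lemma Fint_opt (x : Q) : Fintegrand (fun x => (pst x)%:E) x = (pst x)%:E.
Proof.
apply/le_anti/andP; split.
  by apply: Fint_le; exact: pst_le.
apply: ereal_sup_ubound; exists x => //.
rewrite /Tset /=; apply/le_anti/andP; split.
  apply: le_ereal_inf_tmp => _ [z _ <-].
  by rewrite /dQ mdistxx add0e -EFinD lee_fin pst_tri.
by apply: ereal_inf_lbound; exists x.
Qed.

End aux.

Theorem theorem3p1 (R : realType) (Q : pmetricType R)
  (p0 : Q -> \bar R)
  (f : {measure set (borel_of Q) -> \bar R}) :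
  compact [set: Q] ->
  (forall x, 0 <= p0 x) ->
  (exists x, p0 x != +oo) ->
  f [set: borel_of Q] < +oo ->
  (forall x, exists q : Q -> R,
     [/\ Lip1 q, (forall y, (q y)%:E <= p0 y) & (q x)%:E = p_opt p0 x]) /\
  admissible p0 (p_opt p0) /\
  (forall p, admissible p0 p -> Fobj f p <= Fobj f (p_opt p0)).
Proof.
move=> _ p0_ge0 [y0 p0y0] _.
rewrite (@popt_eq _ _ p0 p0_ge0 y0 p0y0).
split.
  move=> x; exists (pst p0); split.
  - exact: (@pst_lip _ _ p0 p0_ge0 y0 p0y0).
  - exact: (@pst_le _ _ p0 p0_ge0 y0 p0y0).
  - by [].
split.
  split; last exact: (@pst_le _ _ p0 p0_ge0 y0 p0y0).
  move=> x a ax; rewrite lte_fin in ax.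
  exists (ball x (pst p0 x - a)%R).
    by apply: nbhsx_ballx; rewrite subr_gt0.
  move=> y; rewrite ballEmdist /= => hy.
  have h := @pst_tri _ _ p0 p0_ge0 y0 p0y0 x y.
  rewrite /dQ in h; rewrite lte_fin; lra.
move=> p [_ pp0].
rewrite /Fobj.
have -> : (fun x => Fintegrand (fun x0 : Q => (pst p0 x0)%:E) x) =
  (fun x => (pst p0 x)%:E).
  by apply: funext => x; rewrite (@Fint_opt _ _ p0 p0_ge0 y0 p0y0).
rewrite integralE.
apply: (@le_trans _ _ (\int[f]_(x in [set: borel_of Q]) (Fintegrand p)^\+ x)).
  rewrite -[X in _ <= X]sube0; apply: leeB => //.
  by apply: integral_ge0 => x _; exact: funeneg_ge0.
have -> : \int[f]_(x in [set: borel_of Q]) (pst p0 x)%:E =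
   \int[f]_(x in [set: borel_of Q]) (fun x => (pst p0 x)%:E)^\+ x.
  apply: eq_integral => x _; rewrite funeposE.
  by apply/esym/max_idPl; rewrite (@pstE _ _ p0 p0_ge0 y0 p0y0) Ef_ge0.
rewrite !ge0_integralTE //; try by move=> x; exact: funepos_ge0.
apply: le_ereal_sup => _ [h hh <-]; exists h => // x.
apply: (le_trans (hh x)).
apply: (@funepos_le _ _ setT) => //.
  move=> z _; exact: (@Fint_le _ _ p0 p0_ge0 y0 p0y0).
by rewrite in_setT.
Qed.
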